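(* There is an absolute constant $\kappa>0$ such that the following holds. Let $X,Y,Z$ be finite sets with $|Z|\ge 2$ and $f:X\times Y\to Z$ with $\mathrm{mdisc}(f)\le 2^{-d}$. Let $l,r\ge 1$ and let $O=\{(i_1,j_1),\dots,(i_k,j_k)\}$ be a set of $k$ distinct pairs with $i_t\in\{1,\dots,l\}$, $j_t\in\{1,\dots,r\}$, where $k\le d/5$. Define $f_O:X^l\times Y^r\to Z^k$ by $f_O(x_1,\dots,x_l,y_1,\dots,y_r)=(f(x_{i_1},y_{j_1}),\dots,f(x_{i_k},y_{j_k}))$. Then $\mathrm{mdisc}(f_O)\le \kappa\, 2^{-d/4}$, where the multicolor discrepancy of $f_O$ is taken with color set $Z^k$ and the uniform distribution on $X^l\times Y^r$.
   Context: Rectangles are product sets $A\times B$ in the relevant product domain; $\mu$ is the uniform distribution on that domain. For $M:U\times V\to W$ with $W$ finite, $\mathrm{mdisc}(M)=\max_R\max_{w\in W}|\mu(R\cap M^{-1}(w))-\mu(R)/|W||$, maximum over all rectangles $R\subseteq U\times V$. *)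

(* Defs.v *)
From HB Require Import structures.
From mathcomp Require Import all_boot all_order all_algebra.
From mathcomp Require Import all_classical all_reals all_analysis.
From mathcomp Require Import Rstruct.
From Stdlib Require Import Rdefinitions.
Set Implicit Arguments. Unset Strict Implicit. Unset Printing Implicit Defensive.
Import Order.TTheory GRing.Theory Num.Theory.
Local Open Scope ring_scope.

Definition rect_disc (U V W : finType) (M : U -> V -> W)
  (A : {set U}) (B : {set V}) (w : W) : R :=
  `| (#|[set p : U * V | (p.1 \in A) && (p.2 \in B) && (M p.1 p.2 == w)]|%:R
        / (#|U| * #|V|)%:R)
     - ((#|A| * #|B|)%:R / (#|U| * #|V|)%:R) / #|W|%:R |.

Definition mdisc (U V W : finType) (M : U -> V -> W) : R :=
  \big[Num.max/0]_(A : {set U}) \big[Num.max/0]_(B : {set V})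
     \big[Num.max/0]_(w : W) rect_disc M A B w.

(* f_O : X^l x Y^r -> Z^k, O given as an injective enumeration t |-> (i_t, j_t) *)
Definition fO (X Y Z : finType) (l r k : nat) (f : X -> Y -> Z)
  (O : {ffun 'I_k -> 'I_l * 'I_r})
  (x : {ffun 'I_l -> X}) (y : {ffun 'I_r -> Y}) : {ffun 'I_k -> Z} :=
  [ffun t => f (x (O t).1) (y (O t).2)].

(* Main.v *)
Require Import Defs.
From HB Require Import structures.
From mathcomp Require Import all_boot all_order all_algebra.
From mathcomp Require Import all_classical all_reals all_analysis.
From mathcomp Require Import Rstruct.
From Stdlib Require Import Rdefinitions.
From mathcomp Require Import ring lra zify.
Import Order.TTheory GRing.Theory Num.Theory.
Local Open Scope ring_scope.
Definition updf {I T : finType} (u : {ffun I -> T}) (i : I) (x : T) : {ffun I -> T} :=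
  [ffun i' => if i' == i then x else u i'].

Lemma updf_id {I T : finType} (u : {ffun I -> T}) i x : updf u i x i = x.
Proof. by rewrite ffunE eqxx. Qed.

Lemma updf_ne {I T : finType} (u : {ffun I -> T}) i x i' : i' != i -> updf u i x i' = u i'.
Proof. by rewrite ffunE => /negbTE ->. Qed.

Lemma updfK {I T : finType} (u : {ffun I -> T}) i x : updf (updf u i x) i (u i) = u.
Proof. by apply/ffunP => i'; rewrite !ffunE; case: eqP => [->|]. Qed.

Lemma updf_updf {I T : finType} (u : {ffun I -> T}) i x y : updf (updf u i x) i y = updf u i y.
Proof. by apply/ffunP => i'; rewrite !ffunE; case: eqP. Qed.

Lemma sum_updf (I T : finType) (i : I) (H : {ffun I -> T} -> R) :
  \sum_u \sum_x H (updf u i x) = #|T|%:R * \sum_u H u.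
Proof.
rewrite (pair_big xpredT xpredT (fun u x => H (updf u i x))) /=.
pose g (p : {ffun I -> T} * T) := (updf p.1 i p.2, p.1 i).
have gK : involutive g by case=> u x; rewrite /g /= updfK updf_id.
rewrite (reindex_inj (inv_inj gK)) /=.
rewrite /g /= -(pair_big xpredT xpredT (fun u x => H (updf (updf u i x) i (u i)))) /=.
rewrite mulr_sumr; apply: eq_bigr => u _.
under eq_bigr do rewrite updfK.
by rewrite sumr_const mulr_natl.
Qed.

Lemma card_sumR (T:finType) (A : {pred T}) : (#|A|%:R : R) = \sum_i ((i \in A)%:R : R).
Proof. by rewrite -sum1_card natr_sum big_mkcond /=; apply: eq_bigr => i _; case: (i \in A). Qed.

Lemma natrM' (m n : nat) : ((m * n)%:R : R) = m%:R * n%:R.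
Proof. exact: natrM. Qed.

Lemma sum_prod_div (X Y : finType) (a : X -> R) (b : Y -> R) (z : R) :
  (\sum_x a x) * (\sum_y b y) * z = \sum_x \sum_y a x * b y * z.
Proof.
rewrite -mulrA mulr_suml; apply: eq_bigr => x _.
by rewrite mulr_suml mulr_sumr; apply: eq_bigr => y _; rewrite mulrA.
Qed.

Lemma slice_sum_eq (X Y Z : finType) (f : X -> Y -> Z) (A' : {set X}) (B' : {set Y}) c (z : R) :
  \sum_x \sum_y ((x \in A') && (y \in B'))%:R * ((f x y == c)%:R - z) =
  #|[set p : X * Y | (p.1 \in A') && (p.2 \in B') && (f p.1 p.2 == c)]|%:R
   - (#|A'| * #|B'|)%:R * z.
Proof.
rewrite natrM' [#|A'|%:R]card_sumR [#|B'|%:R]card_sumR [#|[set _ | _]|%:R]card_sumR sum_prod_div.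
rewrite (pair_big xpredT xpredT) /= (pair_big xpredT xpredT) /= -sumrB.
apply: eq_bigr => p _; rewrite !inE.
by case: (p.1 \in A'); case: (p.2 \in B'); case: (f p.1 p.2 == c); rewrite /=; ring.
Qed.

Lemma sum_sum_const (U V : finType) (c : R) :
  \sum_(u : U) \sum_(v : V) c = (#|U| * #|V|)%:R * c.
Proof. by rewrite !sumr_const -mulrnA mulr_natl mulnC. Qed.

Section Main.
Variables (X Y Z : finType) (f : X -> Y -> Z) (l r k : nat) (O : {ffun 'I_k -> 'I_l * 'I_r}).
Hypothesis injO : injective O.
Variables (A : {set {ffun 'I_l -> X}}) (B : {set {ffun 'I_r -> Y}}) (w : {ffun 'I_k -> Z}).

Definition match_ (s : 'I_k) (u : {ffun 'I_l -> X}) (v : {ffun 'I_r -> Y}) : bool :=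
  f (u (O s).1) (v (O s).2) == w s.
Definition P (t : nat) u v : bool :=
  [&& u \in A, v \in B & [forall s : 'I_k, leq (nat_of_ord s).+1 t ==> match_ s u v]].
Definition C (t : nat) : R := \sum_u \sum_v (P t u v)%:R.

Lemma P_succ (t : 'I_k) u v : P t.+1 u v = P t u v && match_ t u v.
Proof.
rewrite /P -!andbA; congr [&& _, _ & _].
apply/forallP/andP.
  move=> H; split; last exact: (implyP (H t)).
  apply/forallP => s; apply/implyP => st; apply: (implyP (H s)); exact: ltnW.
case=> /forallP H Ht s; apply/implyP; rewrite ltnS leq_eqVlt => /orP [/eqP st|st].
  by have -> : s = t by apply: val_inj.
exact: (implyP (H s)).
Qed.

Lemma step_diff (t : 'I_k) : C t.+1 - C t / #|Z|%:R =
  \sum_u \sum_v (P t u v)%:R * ((match_ t u v)%:R - #|Z|%:R^-1).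
Proof.
rewrite /C mulr_suml -sumrB; apply: eq_bigr => u _.
rewrite mulr_suml -sumrB; apply: eq_bigr => v _.
by rewrite P_succ -mulnb natrM mulrBr.
Qed.


Definition Aslice (t : 'I_k) u v : {set X} :=
  [set x | (updf u (O t).1 x \in A) && [forall s : 'I_k, (leq (nat_of_ord s).+1 t && ((O s).2 != (O t).2)) ==>
     (f (updf u (O t).1 x (O s).1) (v (O s).2) == w s)]].
Definition Bslice (t : 'I_k) u v : {set Y} :=
  [set y | (updf v (O t).2 y \in B) && [forall s : 'I_k, (leq (nat_of_ord s).+1 t && ((O s).2 == (O t).2)) ==>
     (f (u (O s).1) y == w s)]].

Lemma neq1 (t s : 'I_k) : leq (nat_of_ord s).+1 t -> (O s).2 = (O t).2 -> (O s).1 != (O t).1.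
Proof.
move=> st sj; apply/eqP => si.
have /injO e : O s = O t by apply: injective_projections.
by rewrite e ltnn in st.
Qed.

Lemma P_slice (t : 'I_k) u v x y :
  P t (updf u (O t).1 x) (updf v (O t).2 y) = (x \in Aslice t u v) && (y \in Bslice t u v).
Proof.
rewrite /P !inE.
have -> : [forall s : 'I_k, leq (nat_of_ord s).+1 t ==>
      match_ s (updf u (O t).1 x) (updf v (O t).2 y)] =
   [forall s : 'I_k, (leq (nat_of_ord s).+1 t && ((O s).2 != (O t).2)) ==>
     (f (updf u (O t).1 x (O s).1) (v (O s).2) == w s)] &&
   [forall s : 'I_k, (leq (nat_of_ord s).+1 t && ((O s).2 == (O t).2)) ==>
     (f (u (O s).1) y == w s)].
  apply/forallP/andP.
    move=> H; split; apply/forallP => s; apply/implyP => /andP [st sj];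
      have := implyP (H s) st; rewrite /match_.
      by rewrite (updf_ne _ _ _ _ sj).
    by rewrite (updf_ne _ _ _ _ (neq1 _ _ st (eqP sj))) (eqP sj) updf_id.
  case => /forallP HA /forallP HB s; apply/implyP => st; rewrite /match_.
  case sj: ((O s).2 == (O t).2).
    rewrite (updf_ne _ _ _ _ (neq1 _ _ st (eqP sj))) (eqP sj) updf_id.
    by apply: (implyP (HB s)); rewrite st sj.
  rewrite (updf_ne v _ _ _ (negbT sj)); move: (implyP (HA s)); rewrite st sj; by apply.
apply/idP/idP => [/and4P [a b c d]|/and3P [/andP [a c] b d]]; [apply/and3P; split => //; apply/andP | apply/and4P]; by split.
Qed.


Lemma rect_le_mdisc (U V W : finType) (M : U -> V -> W) A0 B0 w0 :
  rect_disc M A0 B0 w0 <= mdisc M.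
Proof.
rewrite /mdisc.
apply/bigmax_geP; right; exists A0 => //.
apply/bigmax_geP; right; exists B0 => //.
by apply/bigmax_geP; right; exists w0.
Qed.

Lemma mdisc_ge0 (U V W : finType) (M : U -> V -> W) : 0 <= mdisc M.
Proof. exact: bigmax_ge_id. Qed.

Lemma slice_bound (t : 'I_k) u v :
  `| \sum_x \sum_y (P t (updf u (O t).1 x) (updf v (O t).2 y))%:R *
       ((match_ t (updf u (O t).1 x) (updf v (O t).2 y))%:R - #|Z|%:R^-1) |
  <= (#|X| * #|Y|)%:R * mdisc f.
Proof.
set A' := Aslice t u v; set B' := Bslice t u v; set c := w t.
have E : \sum_x \sum_y (P t (updf u (O t).1 x) (updf v (O t).2 y))%:R *
       ((match_ t (updf u (O t).1 x) (updf v (O t).2 y))%:R - #|Z|%:R^-1) =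
  #|[set p : X * Y | (p.1 \in A') && (p.2 \in B') && (f p.1 p.2 == c)]|%:R
   - (#|A'| * #|B'|)%:R / (#|Z|%:R : R).
  rewrite -slice_sum_eq; apply: eq_bigr => x _; apply: eq_bigr => y _.
  by rewrite P_slice /match_ !updf_id.
rewrite E.
have Xpos : leq 1 #|X| by apply/card_gt0P; exists (u (O t).1).
have Ypos : leq 1 #|Y| by apply/card_gt0P; exists (v (O t).2).
have Npos : (0 : R) < (#|X| * #|Y|)%:R by rewrite natrM' mulr_gt0 // ltr0n.
have := @rect_le_mdisc _ _ _ f A' B' c.
rewrite /rect_disc.
set N := ((#|X| * #|Y|)%:R : R).
set a := (#|[set p : X * Y | (p.1 \in A') && (p.2 \in B') && (f p.1 p.2 == c)]|%:R : R).
set b := ((#|A'| * #|B'|)%:R : R).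
have -> : a / N - b / N / #|Z|%:R = (a - b / #|Z|%:R) / N by rewrite mulrBl mulrAC.
rewrite normrM normfV (gtr0_norm Npos) ler_pdivrMr // => H.
by rewrite [N * _]mulrC.
Qed.


Lemma step_bound (t : 'I_k) :
  `|C t.+1 - C t / #|Z|%:R| <=
     (#|{ffun 'I_l -> X}| * #|{ffun 'I_r -> Y}|)%:R * mdisc f.
Proof.
have Nge0 : 0 <= (#|{ffun 'I_l -> X}| * #|{ffun 'I_r -> Y}|)%:R * mdisc f :> R.
  by apply: mulr_ge0; [exact: ler0n | exact: mdisc_ge0].
rewrite step_diff.
pose H u v : R := (P t u v)%:R * ((match_ t u v)%:R - #|Z|%:R^-1).
change (`|\sum_u \sum_v H u v| <= (#|{ffun 'I_l -> X}| * #|{ffun 'I_r -> Y}|)%:R * mdisc f).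
have [X0|Xpos] := posnP #|X|.
  rewrite big1 ?normr0 // => u _; exfalso.
  by move/card0_eq: X0 => /(_ (u (O t).1)); rewrite !inE.
have [Y0|Ypos] := posnP #|Y|.
  rewrite big1 ?normr0 // => u _; rewrite big1 // => v _; exfalso.
  by move/card0_eq: Y0 => /(_ (v (O t).2)); rewrite !inE.
have key : \sum_u \sum_v \sum_x \sum_y H (updf u (O t).1 x) (updf v (O t).2 y)
    = (#|X| * #|Y|)%:R * \sum_u \sum_v H u v.
  under eq_bigr => u _ do rewrite exchange_big /=.
  under eq_bigr => u _ do under eq_bigr => x _ do rewrite (sum_updf _ _ (O t).2 (fun v => H (updf u (O t).1 x) v)).
  under eq_bigr => u _ do rewrite -mulr_sumr.
  rewrite -mulr_sumr (sum_updf _ _ (O t).1 (fun u => \sum_v H u v)).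
  by rewrite natrM' mulrA [(#|X|%:R * _)]mulrC.
have XYpos : (0 : R) < (#|X| * #|Y|)%:R by rewrite natrM' mulr_gt0 // ltr0n.
rewrite -(ler_pM2l XYpos).
rewrite -{1}(gtr0_norm XYpos) -normrM -key.
apply: le_trans (ler_norm_sum _ _ _) _.
apply: (@le_trans _ _ (\sum_(u : {ffun 'I_l -> X}) \sum_(v : {ffun 'I_r -> Y}) (#|X| * #|Y|)%:R * mdisc f)).
  apply: ler_sum => u _; apply: le_trans (ler_norm_sum _ _ _) _.
  by apply: ler_sum => v _; exact: slice_bound.
rewrite sum_sum_const.
by rewrite mulrA [(_ * _)%:R * _]mulrC mulrA.
Qed.


Lemma term_bound (t : 'I_k) :
  `|C t.+1 / #|Z|%:R ^+ (k - t.+1) - C t / #|Z|%:R ^+ (k - t)| <=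
     (#|{ffun 'I_l -> X}| * #|{ffun 'I_r -> Y}|)%:R * mdisc f.
Proof.
have Z1 : (1 : R) <= #|Z|%:R by rewrite ler1n; apply/card_gt0P; exists (w t).
have Zn1 : (1 : R) <= #|Z|%:R ^+ (k - t.+1) by exact: exprn_ege1.
have Znpos : (0 : R) < #|Z|%:R ^+ (k - t.+1) by apply: lt_le_trans Zn1.
rewrite -(subnSK (ltn_ord t)) exprS invfM mulrA -mulrBl normrM normfV (gtr0_norm Znpos).
apply: le_trans _ (step_bound t).
by rewrite ler_pdivrMr //; apply: ler_peMr.
Qed.

Lemma tele : `|C k - C 0 / #|Z|%:R ^+ k| <=
   k%:R * ((#|{ffun 'I_l -> X}| * #|{ffun 'I_r -> Y}|)%:R * mdisc f).
Proof.
pose F (t : nat) := C t / #|Z|%:R ^+ (k - t).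
have E : C k - C 0 / #|Z|%:R ^+ k = \sum_(0 <= t < k) (F t.+1 - F t).
  by rewrite telescope_sumr // /F subnn expr0 divr1 subn0.
rewrite E big_mkord.
apply: le_trans (ler_norm_sum _ _ _) _.
apply: le_trans (ler_sum _ (fun t _ => term_bound t)) _.
by rewrite sumr_const [k%:R * _]mulr_natl card_ord.
Qed.


Lemma rect_fO : rect_disc (fO f O) A B w <= k%:R * mdisc f.
Proof.
have Ck : C k = #|[set p | (p.1 \in A) && (p.2 \in B) && (fO f O p.1 p.2 == w)]|%:R.
  rewrite /C (pair_big xpredT xpredT) /= card_sumR; apply: eq_bigr => p _.
  rewrite inE /P.
  have -> : [forall s : 'I_k, leq (nat_of_ord s).+1 k ==> match_ s p.1 p.2] = (fO f O p.1 p.2 == w).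
    apply/forallP/eqP => [H|E s].
      apply/ffunP => s; rewrite ffunE; exact/eqP/(implyP (H s) (ltn_ord s)).
    by apply/implyP => _; rewrite /match_ -E ffunE.
  by rewrite andbA.
have C0 : C 0 = (#|A| * #|B|)%:R.
  rewrite /C natrM' !card_sumR mulr_suml; apply: eq_bigr => u _.
  rewrite mulr_sumr; apply: eq_bigr => v _; rewrite /P.
  have -> : [forall s : 'I_k, leq (nat_of_ord s).+1 0 ==> match_ s u v] = true by apply/forallP => s.
  by rewrite andbT -natrM' mulnb.
have cardW : #|{ffun 'I_k -> Z}| = expn #|Z| k by rewrite card_ffun card_ord.
rewrite /rect_disc -Ck cardW natrX -C0.
have := ler0n R (#|{ffun 'I_l -> X}| * #|{ffun 'I_r -> Y}|).
rewrite le_eqVlt => /orP [/eqP N0|Npos].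
  rewrite -N0 invr0 !mulr0 mul0r subrr normr0.
  by apply: mulr_ge0; [exact: ler0n | exact: mdisc_ge0].
rewrite [C 0 / _ / _]mulrAC -mulrBl.
rewrite normrM normfV (gtr0_norm Npos) ler_pdivrMr //.
apply: le_trans (tele) _.
by rewrite [_ * mdisc f]mulrC mulrA.
Qed.

End Main.

Theorem mainTheorem5 :
  exists kappa : R, 0 < kappa /\
  forall (X Y Z : finType) (f : X -> Y -> Z) (d : R) (l r k : nat)
         (O : {ffun 'I_k -> 'I_l * 'I_r}),
    leq 2 #|Z| ->
    mdisc f <= 2 `^ (- d) ->
    leq 1 l -> leq 1 r ->
    injective O ->
    k%:R <= d / 5 ->
    mdisc (fO f O) <= kappa * 2 `^ (- d / 4).
Proof.
exists 1; split => //.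
move=> X Y Z f d l r k O Z2 Hd l1 r1 injO kd.
have k0 : 0 <= k%:R :> R by exact: ler0n.
have dge0 : 0 <= d by lra.
have Hk : mdisc (fO f O) <= k%:R * mdisc f.
  have km : 0 <= k%:R * mdisc f by apply: mulr_ge0 => //; exact: mdisc_ge0.
  rewrite /mdisc; apply: bigmax_le => // A _.
  apply: bigmax_le => // B _; apply: bigmax_le => // w _.
  exact: rect_fO.
apply: le_trans Hk _.
apply: le_trans (ler_wpM2l k0 Hd) _.
rewrite mul1r.
have k2 : k%:R <= 2 `^ (3 * d / 4).
  apply: (@le_trans _ _ (2 `^ k%:R)).
    rewrite powR_mulrn // -natrX ler_nat; exact: ltnW (ltn_expl k (ltnSn 1)).
  by apply: ler_powR => //; lra.
apply: le_trans (ler_wpM2r (powR_ge0 _ _) k2) _.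
rewrite -powRD; last by apply/implyP => _; rewrite pnatr_eq0.
by have -> : 3 * d / 4 + - d = - d / 4 by field.
Qed.
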